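(* Let $\tau$ be a substitution over a finite alphabet $A$. Then $\overline\tau$ induces a well-defined map on the Besicovitch space (i.e. $\mathfrak d_H(x,y)=0$ implies $\mathfrak d_H(\overline\tau(x),\overline\tau(y))=0$ for all $x,y\in A^{\mathbb N}$) if and only if $\overline\tau$ is $1$-Lipschitz with respect to $\mathfrak d_H$, i.e. $\mathfrak d_H(\overline\tau(x),\overline\tau(y))\le\mathfrak d_H(x,y)$ for all $x,y\in A^{\mathbb N}$.
   Context: A substitution is a nonerasing monoid morphism $\tau:A^*\to A^*$ (so $\tau(a)$ is a nonempty word for each letter $a$), and $\overline\tau:A^{\mathbb N}\to A^{\mathbb N}$ is $\overline\tau(z)=\tau(z_0)\tau(z_1)\tau(z_2)\cdots$. For words $u,v$ of equal length, $d_H(u,v)$ is the number of positions where they differ; the Besicovitch pseudo-metric is $\mathfrak d_H(x,y)=\limsup_{l\to\infty}\frac{d_H(x_{[0,l)},y_{[0,l)})}{l}$, where $x_{[0,l)}=x_0\cdots x_{l-1}$. *)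

(* Defs.v *)
From HB Require Import structures.
From mathcomp Require Import all_boot all_order all_algebra.
From mathcomp Require Import all_classical all_reals all_analysis.
Set Implicit Arguments. Unset Strict Implicit. Unset Printing Implicit Defensive.
Import Order.TTheory GRing.Theory Num.Theory.
Local Open Scope ring_scope.

Definition substitution (A : finType) (tau : A -> seq A) : Prop :=
  forall a : A, (0 < size (tau a))%N.

(* tau-bar(z) = tau(z_0) tau(z_1) ... ; position n lies inside the first n+1
   blocks (each block nonempty), default letter is irrelevant then. *)
Definition subst_seq (A : finType) (tau : A -> seq A) (z : nat -> A) : nat -> A :=
  fun n => nth (z 0%N) (flatten [seq tau (z i) | i <- iota 0 n.+1]) n.

Definition hamming_prefix (A : finType) (x y : nat -> A) (l : nat) : nat :=
  count (fun i => x i != y i) (iota 0 l).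

(* Besicovitch pseudo-metric: limsup_{l -> oo} d_H(x_[0,l), y_[0,l)) / l,
   (index l = n.+1 to avoid l = 0), as an extended real. *)
Definition besicovitch (R : realType) (A : finType) (x y : nat -> A) : \bar R :=
  limn_esup (fun n : nat => ((hamming_prefix x y n.+1)%:R / (n.+1)%:R : R)%:E).

(* Main.v *)
Require Import Defs.
From HB Require Import structures.
From mathcomp Require Import all_boot all_order all_algebra.
From mathcomp Require Import all_classical all_reals all_analysis.
From mathcomp Require Import zify ring lra.
From Stdlib Require Import Lia.
Import Order.TTheory GRing.Theory Num.Theory.
Set Implicit Arguments. Unset Strict Implicit. Unset Printing Implicit Defensive.

Section Words.
Variables (A : finType) (tau : A -> seq A).
Hypothesis Htau : substitution tau.

Definition FF (z : nat -> A) m := flatten [seq tau (z i) | i <- iota 0 m].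

Lemma FF_add z m k : FF z (m + k) = FF z m ++ flatten [seq tau (z i) | i <- iota m k].
Proof. by rewrite /FF iotaD map_cat flatten_cat. Qed.

Lemma FF_S z m : FF z m.+1 = FF z m ++ tau (z m).
Proof. by rewrite -addn1 FF_add /= cats0. Qed.

Lemma size_FF z m : (m <= size (FF z m))%N.
Proof.
elim: m => [//|m IH]; rewrite FF_S size_cat.
have := Htau (z m); lia.
Qed.

Lemma FF_prefix z m k n d : (n < size (FF z m))%N ->
  nth d (FF z (m + k)) n = nth d (FF z m) n.
Proof. by move=> H; rewrite FF_add nth_cat H. Qed.

Lemma subst_seqE z m n d : (n < size (FF z m))%N ->
  subst_seq tau z n = nth d (FF z m) n.
Proof.
move=> H; rewrite /subst_seq -/(FF z n.+1).
have Hn : (n < size (FF z n.+1))%N by have := size_FF z n.+1; lia.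
rewrite (set_nth_default d _ Hn).
case: (leqP m n.+1) => Hm.
  by rewrite -(subnKC Hm) FF_prefix.
by rewrite -(subnKC (ltnW Hm)) FF_prefix.
Qed.

Lemma FF_shift z k : FF z k.+1 = tau (z 0) ++ FF (fun i => z i.+1) k.
Proof.
rewrite /FF -add1n iotaD /= add0n.
have -> : iota 1 k = map (addn 1) (iota 0 k) by rewrite -iotaDl.
rewrite -map_comp; congr (_ ++ flatten _); by apply: eq_map => i /=.
Qed.

Lemma first_block z n d : (n < size (tau (z 0)))%N ->
  subst_seq tau z n = nth d (tau (z 0)) n.
Proof.
move=> H; rewrite (@subst_seqE z 1 n d); last by rewrite /FF /= cats0.
by rewrite /FF /= cats0.
Qed.

Lemma shift1 z n :
  subst_seq tau z (n + size (tau (z 0))) = subst_seq tau (fun i => z i.+1) n.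
Proof.
have H1 : (n + size (tau (z 0)) < size (FF z n.+2))%N.
  rewrite FF_shift size_cat; have := size_FF (fun i => z i.+1) n.+1; lia.
rewrite (@subst_seqE z n.+2 _ (z 0)) // FF_shift nth_cat.
rewrite ltnNge leq_addl /= addnK.
rewrite (@subst_seqE _ n.+1 n (z 0)) //.
have := size_FF (fun i => z i.+1) n.+1; lia.
Qed.

Lemma subst_ext z z' : z =1 z' -> subst_seq tau z =1 subst_seq tau z'.
Proof. by move=> H; have -> : z = z' by apply/funext. Qed.

Lemma shiftj z j n :
  subst_seq tau z (n + size (FF z j)) = subst_seq tau (fun i => z (i + j)) n.
Proof.
elim: j n => [|j IH] n.
  by rewrite /FF /= addn0; apply: subst_ext => i; rewrite addn0.
rewrite FF_S size_cat (addnC (size (FF z j))) addnA IH.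
have := shift1 (fun i => z (i + j)) n; rewrite /= add0n addnC => ->.
by apply: subst_ext => i; rewrite addSnnS.
Qed.

End Words.

Section Ham.
Variables (A : finType).
Implicit Types x y : nat -> A.

Lemma H_add x y l k : hamming_prefix x y (l + k) =
  hamming_prefix x y l + count (fun i => x i != y i) (iota l k).
Proof. by rewrite /hamming_prefix iotaD count_cat. Qed.

Lemma H_S x y l : hamming_prefix x y l.+1 = hamming_prefix x y l + (x l != y l).
Proof. by rewrite -addn1 H_add /= addn0. Qed.

Lemma H_mono x y l l' : (l <= l')%N -> (hamming_prefix x y l <= hamming_prefix x y l')%N.
Proof. by move=> H; rewrite -(subnKC H) H_add leq_addr. Qed.

Lemma H_le x y l : (hamming_prefix x y l <= l)%N.
Proof. by rewrite /hamming_prefix (leq_trans (count_size _ _)) // size_iota. Qed.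

End Ham.

Section Limsup.
Variable R : realType.
Local Open Scope ereal_scope.
Implicit Types u : (\bar R)^nat.

Lemma esup_inf u : limn_esup u = ereal_inf (range (esups u)).
Proof. by rewrite limn_esup_lim; apply/cvg_lim => //; exact: cvg_esups_inf. Qed.

Lemma limsup_ge u c : (forall N, exists2 m, (N <= m)%N & c <= u m) -> c <= limn_esup u.
Proof.
move=> H; rewrite esup_inf; apply: le_ereal_inf_tmp => _ [n _ <-].
have [m nm cm] := H n; apply: (le_trans cm); apply: ereal_sup_ubound; by exists m.
Qed.

Lemma limsup_lt u b : limn_esup u < b -> exists N, forall m, (N <= m)%N -> u m < b.
Proof.
rewrite esup_inf => /ereal_inf_lt [_ [n _ <-]] H; exists n => m nm.
apply: le_lt_trans H; apply: ereal_sup_ubound; by exists m.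
Qed.

Lemma limsup_le u l : (forall e : R, (0 < e)%R -> exists N, forall m, (N <= m)%N -> u m <= l + e%:E) ->
  limn_esup u <= l.
Proof.
move=> H; apply/lee_addgt0Pr => e e0; have [N HN] := H e e0; rewrite esup_inf.
apply: (le_trans (ereal_inf_lbound _)); first by exists N.
apply: ge_ereal_sup => _ [m /= nm <-]; exact: HN.
Qed.

End Limsup.

Section Bes.
Variables (R : realType) (A : finType).
Local Open Scope ring_scope.
Implicit Types x y : nat -> A.

Lemma bes_ge0 x y : (0 <= besicovitch R x y)%E.
Proof.
apply: limsup_ge => N; exists N => //; rewrite lee_fin; apply: divr_ge0; exact: ler0n.
Qed.

Lemma bes_zero x y : (forall n, (hamming_prefix x y n.+1 <= 1)%N) -> besicovitch R x y = 0%E.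
Proof.
move=> H; apply/eqP; rewrite eq_le bes_ge0 andbT; apply: limsup_le => e e0.
exists (Num.trunc (e^-1)) => m Hm; rewrite add0e lee_fin.
have Hp : (0 : R) < (m.+1)%:R by rewrite ltr0n.
rewrite ler_pdivrMr // (le_trans (y := 1)) //; first by rewrite lern1 H.
rewrite -ler_pdivrMl // mulr1; apply/ltW; apply: (lt_le_trans (truncnS_gt _)).
by rewrite ler_nat.
Qed.

Lemma H_lower x y t0 P : (0 < P)%N -> (forall j, x (t0 + j * P)%N != y (t0 + j * P)%N) ->
  forall j, (j.+1 <= hamming_prefix x y (t0 + j * P).+1)%N.
Proof.
move=> P0 H; elim=> [|j IH]; first by rewrite H_S (H 0) addn1.
rewrite H_S (H j.+1) addn1 ltnS.
have : ((t0 + j * P).+1 <= (t0 + j.+1 * P))%N by rewrite mulSn; lia.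
by move=> /(H_mono x y) => /(leq_trans IH).
Qed.

Lemma bes_pos x y t0 P : (0 < P)%N -> (forall j, x (t0 + j * P)%N != y (t0 + j * P)%N) ->
  (0 < besicovitch R x y)%E.
Proof.
move=> P0 H; apply: (@lt_le_trans _ _ (((t0 + P).+1%:R : R)^-1)%:E).
  by rewrite lte_fin invr_gt0 ltr0n.
apply: limsup_ge => N; exists (t0 + N * P)%N.
  exact: (leq_trans (leq_pmulr N P0) (leq_addl _ _)).
rewrite lee_fin ler_pdivlMr ?ltr0n // mulrC ler_pdivrMr ?ltr0n // -natrM ler_nat.
have := H_lower P0 H N; nia.
Qed.
End Bes.

Section ConstLen.
Variables (R : realType) (A : finType) (tau : A -> seq A) (k : nat).
Hypothesis Hk : forall a, size (tau a) = k.
Hypothesis k0 : (0 < k)%N.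
Local Open Scope ring_scope.

Let Htau : substitution tau.
Proof. by move=> a; rewrite Hk. Qed.

Lemma size_FFk z i : size (FF tau z i) = (i * k)%N.
Proof. by elim: i => [//|i IH]; rewrite FF_S size_cat Hk IH mulSn addnC. Qed.

Lemma blockk z i j d : (j < k)%N -> subst_seq tau z (j + i * k)%N = nth d (tau (z i)) j.
Proof.
move=> jk; rewrite -(size_FFk z i) (shiftj Htau) (first_block Htau d) /= ?add0n //.
by rewrite Hk.
Qed.

Lemma Hk_bound x y s : (hamming_prefix (subst_seq tau x) (subst_seq tau y) (s * k)
   <= hamming_prefix x y s * k)%N.
Proof.
elim: s => [|s IH]; first by rewrite mul0n.
rewrite mulSnr H_add H_S mulnDl leq_add //.
case: eqP => E.
  rewrite (@eq_in_count _ _ pred0) ?count_pred0 // => i; rewrite mem_iota => /andP[h1 h2] /=.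
  apply/negbTE; rewrite negbK; apply/eqP; rewrite -(subnK h1).
  have hj : (i - s * k < k)%N by lia.
  by rewrite (blockk x s (x 0) hj) (blockk y s (x 0) hj) E.
by rewrite mul1n (leq_trans (count_size _ _)) // size_iota.
Qed.

Lemma lipk x y : (besicovitch R (subst_seq tau x) (subst_seq tau y) <= besicovitch R x y)%E.
Proof.
case Hl: (besicovitch R x y) => [l||]; last 2 first.
- by rewrite leey.
- by have := bes_ge0 R x y; rewrite Hl.
apply: limsup_le => e e0.
have [N1 HN1] : exists N1, forall n, (N1 <= n)%N ->
    (hamming_prefix x y n.+1)%:R / (n.+1)%:R < l + e / 2.
  have : (besicovitch R x y < (l + e / 2)%:E)%E.
    by rewrite Hl lte_fin ltrDl divr_gt0.
  rewrite /besicovitch => /limsup_lt [N HN]; exists N => n /HN; by rewrite lte_fin.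
exists (maxn (N1.+1 * k) (Num.trunc (2 * k%:R / e))) => m; rewrite geq_max => /andP[h1 h2].
set r := (m %/ k)%N.
have r1 : (N1.+1 <= r)%N by rewrite -(mulnK N1.+1 k0); apply: leq_div2r.
have hm1 : (m < r.+1 * k)%N := ltn_ceil m k0.
have hm2 : (r * k <= m)%N := leq_trunc_div m k.
set b := hamming_prefix (subst_seq tau x) (subst_seq tau y) m.+1.
set a := hamming_prefix x y r.
have HH : (b <= a * k + k)%N.
  apply: (leq_trans (H_mono _ _ hm1)); apply: (leq_trans (Hk_bound _ _ _)).
  by rewrite H_S mulnDl leq_add //; case: (x r != y r); rewrite ?mul1n ?mul0n.
have Nat : (b * r <= a * m.+1 + k * r)%N by nia.
have rpos : (0 : R) < r%:R by rewrite ltr0n; lia.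
have Mpos : (0 : R) < (m.+1)%:R by rewrite ltr0n.
have step1 : (b%:R : R) / (m.+1)%:R <= a%:R / r%:R + k%:R / (m.+1)%:R.
  rewrite (_ : (a%:R : R) / r%:R + k%:R / (m.+1)%:R = (a%:R * (m.+1)%:R + k%:R * r%:R) / (r%:R * (m.+1)%:R)); last first.
    by field; apply/andP; split; rewrite gt_eqF.
  rewrite (_ : (b%:R : R) / (m.+1)%:R = (b%:R * r%:R) / (r%:R * (m.+1)%:R)); last first.
    by field; apply/andP; split; rewrite gt_eqF.
  apply: ler_wpM2r; first by rewrite invr_ge0 mulr_ge0 // ltW.
  by rewrite -!natrM -natrD ler_nat.
have step2 : a%:R / r%:R < l + e / 2.
  have := HN1 r.-1; rewrite prednK; last by lia.
  by apply; lia.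
have step3 : (k%:R : R) / (m.+1)%:R <= e / 2.
  rewrite ler_pdivrMr //.
  have : 2 * k%:R / e < (m.+1)%:R.
    apply: (lt_le_trans (truncnS_gt _)); by rewrite ler_nat.
  rewrite ltr_pdivrMr // (_ : e / 2 * (m.+1)%:R = (m.+1)%:R * e / 2); last by ring.
  move=> h; lra.
rewrite -EFinD lee_fin /=.
apply: (le_trans step1); apply: (le_trans (lerD (ltW step2) step3)).
by rewrite -addrA -splitr.
Qed.

End ConstLen.

Definition scons (A : Type) (c : A) (z : nat -> A) : nat -> A :=
  fun i => if i is i'.+1 then z i' else c.

Section NonConst.
Variables (R : realType) (A : finType) (tau : A -> seq A).
Hypothesis Htau : substitution tau.
Hypothesis HW : forall x y : nat -> A, besicovitch R x y = 0%E ->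
  besicovitch R (subst_seq tau x) (subst_seq tau y) = 0%E.
Variables (a b : A).
Hypothesis Hab : (size (tau a) < size (tau b))%N.
Let d := (size (tau b) - size (tau a))%N.
Local Open Scope ring_scope.

Lemma bes_cons c c' (z : nat -> A) : besicovitch R (scons c z) (scons c' z) = 0%E.
Proof.
apply: bes_zero => n; rewrite -add1n H_add.
rewrite (@eq_in_count _ _ pred0) ?count_pred0 ?addn0 ?H_le // => i.
by rewrite mem_iota => /andP[h1 _]; case: i h1 => [//|i] _ /=; rewrite eqxx.
Qed.

Lemma shift_cons c (z : nat -> A) n :
  subst_seq tau (scons c z) (n + size (tau c)) = subst_seq tau z n.
Proof. by rewrite (shift1 Htau (scons c z) n). Qed.

Lemma per_iter (w : nat -> A) P : (forall n, w (n + P)%N = w n) ->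
  forall j n, w (n + j * P)%N = w n.
Proof.
move=> H; elim=> [|j IH] n; first by rewrite mul0n addn0.
by rewrite mulSn addnA IH H.
Qed.

Lemma stepA (z : nat -> A) p : (0 < p)%N -> (forall i, z (i + p)%N = z i) ->
  forall n, subst_seq tau z (n + d)%N = subst_seq tau z n.
Proof.
move=> p0 Hz n0; set w := subst_seq tau z.
set P := size (FF tau z p).
have P0 : (0 < P)%N by apply: (leq_trans p0); apply: size_FF.
have wP : forall n, w (n + P)%N = w n.
  by move=> n; rewrite /w (shiftj Htau); apply: subst_ext => i.
have wjP := per_iter wP.
case: (w (n0 + d)%N =P w n0) => // Hne; exfalso.
have H0 := HW (bes_cons a b z).
suff : (0 < besicovitch R (subst_seq tau (scons a z)) (subst_seq tau (scons b z)))%E.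
  by rewrite H0 ltxx.
apply: (@bes_pos R A _ _ (n0 + size (tau b)) P P0) => j.
have e1 : (n0 + size (tau b) + j * P = (n0 + j * P + d) + size (tau a))%N by rewrite /d; lia.
have e2 : (n0 + size (tau b) + j * P = (n0 + j * P) + size (tau b))%N by lia.
rewrite {1}e1 e2 !shift_cons.
rewrite -/w -addnA (addnC (j * P)) addnA !wjP; by apply/eqP.
Qed.

Lemma size_FF_const c j : size (FF tau (fun _ => c) j) = (j * size (tau c))%N.
Proof. by elim: j => [//|j IH]; rewrite FF_S size_cat IH mulSn addnC. Qed.

Lemma d0 : (0 < d)%N.
Proof. rewrite /d; lia. Qed.

Lemma per_agree (u v : nat -> A) : (forall n, u (n + d)%N = u n) -> (forall n, v (n + d)%N = v n) ->
  (forall n, (n < d)%N -> u n = v n) -> forall n, u n = v n.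
Proof.
move=> hu hv h n; rewrite (divn_eq n d) addnC (per_iter hu) (per_iter hv).
by apply: h; rewrite ltn_mod d0.
Qed.

Lemma const_dper c : forall n, subst_seq tau (fun _ => c) (n + d)%N = subst_seq tau (fun _ => c) n.
Proof. by apply: (stepA (p := 1)). Qed.

Lemma stepB c e : forall n, subst_seq tau (fun _ => c) n = subst_seq tau (fun _ => e) n.
Proof.
have dd : (0 < d.*2)%N by rewrite double_gt0 d0.
set z3 := fun i => if (i %% d.*2 < d)%N then c else e.
set z4 := fun i => z3 (i + d)%N.
have p3 : forall i, z3 (i + d.*2)%N = z3 i by move=> i; rewrite /z3 modnDr.
have p4 : forall i, z4 (i + d.*2)%N = z4 i by move=> i; rewrite /z4 addnAC p3.
have U := stepA dd p3; have V := stepA dd p4.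
have F3 : FF tau z3 d = FF tau (fun _ => c) d.
  rewrite /FF; congr flatten; apply/eq_in_map => i; rewrite mem_iota => /andP[_ h].
  by rewrite /z3 modn_small ?h //; rewrite -addnn; lia.
have F4 : FF tau z4 d = FF tau (fun _ => e) d.
  rewrite /FF; congr flatten; apply/eq_in_map => i; rewrite mem_iota => /andP[_ h].
  rewrite /z4 /z3 modn_small; last by rewrite -addnn; lia.
  by rewrite ltnNge leq_addl.
have UV : forall n, subst_seq tau z3 n = subst_seq tau z4 n.
  move=> n; rewrite -(shiftj Htau z3 d n) F3 size_FF_const mulnC (per_iter U).
  done.
have Lc := Htau c; have Le := Htau e.
have Uc : forall n, subst_seq tau z3 n = subst_seq tau (fun _ => c) n.
  apply: per_agree => //; first exact: const_dper.
  move=> n nd; have hs : (n < d * size (tau c))%N.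
    by apply: (leq_trans nd); rewrite leq_pmulr.
  rewrite (@subst_seqE _ _ Htau z3 d n c) ?F3 ?size_FF_const //.
  by rewrite (@subst_seqE _ _ Htau (fun _ => c) d n c) ?size_FF_const.
have Ve : forall n, subst_seq tau z4 n = subst_seq tau (fun _ => e) n.
  apply: per_agree => //; first exact: const_dper.
    move=> n nd; have hs : (n < d * size (tau e))%N.
    by apply: (leq_trans nd); rewrite leq_pmulr.
  rewrite (@subst_seqE _ _ Htau z4 d n c) ?F4 ?size_FF_const //.
  by rewrite (@subst_seqE _ _ Htau (fun _ => e) d n c) ?size_FF_const.
by move=> n; rewrite -Uc UV Ve.
Qed.

Lemma stepC : forall n (z : nat -> A), subst_seq tau z n = subst_seq tau (fun _ => a) n.
Proof.
elim/ltn_ind => n IH z.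
rewrite (stepB a (z 0)).
case: (ltnP n (size (tau (z 0)))) => h.
  by rewrite !(first_block Htau (z 0)).
rewrite -(subnK h) (shift1 Htau) IH; last by have := Htau (z 0); lia.
rewrite (stepB a (z 0)).
by have := shift1 Htau (fun _ => z 0) (n - size (tau (z 0))).
Qed.

Lemma nonconst_lip x y : (besicovitch R (subst_seq tau x) (subst_seq tau y) <= besicovitch R x y)%E.
Proof.
have -> : besicovitch R (subst_seq tau x) (subst_seq tau y) = 0%E.
  apply: bes_zero => n; rewrite /hamming_prefix.
  rewrite (@eq_count _ _ pred0) ?count_pred0 // => i /=.
  by rewrite !stepC eqxx.
exact: bes_ge0.
Qed.

End NonConst.

Unset Implicit Arguments.
Set Strict Implicit.
Local Open Scope ring_scope.
Local Open Scope ereal_scope.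

Theorem mainTheorem4 (R : realType) (A : finType) (tau : A -> seq A) :
  substitution tau ->
  ((forall x y : nat -> A, besicovitch R x y = 0 ->
      besicovitch R (subst_seq tau x) (subst_seq tau y) = 0)
   <->
   (forall x y : nat -> A,
      besicovitch R (subst_seq tau x) (subst_seq tau y) <= besicovitch R x y)).
Proof.
move=> Htau; split.
- move=> HW x y.
  case: (pselect (exists a b, (size (tau a) < size (tau b))%N)) => [[a [b Hab]]|Hn].
    exact: (nonconst_lip Htau HW Hab).
  have Hk : forall c, size (tau c) = size (tau (x 0%N)).
    move=> c; case: (ltngtP (size (tau c)) (size (tau (x 0%N)))) => // h; exfalso; apply: Hn.
      by exists c, (x 0%N).
    by exists (x 0%N), c.
  exact: (@lipk R A tau _ Hk (Htau (x 0%N)) x y).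
- move=> HL x y H0; apply/eqP; rewrite eq_le bes_ge0 andbT -H0; exact: HL.
Qed.
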